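(* Let $V$ be a simple Yetter-Drinfeld module over $H=B(n,w,\gamma)$ with $\dim_\Bbbk V=p+1$ for some $p\ge0$, and let $v\in V$ be a standard element of type $(\alpha,\beta,x^rg^i)$ with $\alpha,\beta\in\Bbbk^*$, $r,i\in\mathbb{Z}$. If $\beta^n=1$, then $c_\beta^{r,i}(p+1,l)=0$ for all $0\le l\le p$.
   Context: $\Bbbk$ is an algebraically closed field of characteristic $0$; $n,w$ positive integers, $\gamma$ a primitive $n$-th root of unity. $H=B(n,w,\gamma)$ is the Hopf algebra generated by $x^{\pm1},g,y$ with relations $xx^{-1}=x^{-1}x=1$, $xg=gx$, $xy=yx$, $yg=\gamma gy$, $y^n=1-x^w=1-g^n$, with $\Delta(x)=x\otimes x$, $\Delta(g)=g\otimes g$, $\Delta(y)=y\otimes g+1\otimes y$, $\varepsilon(x)=\varepsilon(g)=1$, $\varepsilon(y)=0$, $S(x)=x^{-1}$, $S(g)=g^{-1}$, $S(y)=-yg^{-1}$; $G(H)=\{g^jx^k\}$. A (left-left) Yetter-Drinfeld module is a left $H$-module, left $H$-comodule $(V,\cdot,\delta)$ with $\delta(h\cdot v)=h_{(1)}v_{(-1)}S(h_{(3)})\otimes h_{(2)}\cdot v_{(0)}$; simple means no nonzero proper Yetter-Drinfeld submodules. A nonzero $v\in V$ is a standard element of type $(\alpha,\beta,h)$ if $h\in G(H)$, $\alpha,\beta\in\Bbbk^*$, $x\cdot v=\alpha v$, $g\cdot v=\beta v$, $\delta(v)=h\otimes v$. The elements $c_\beta^{r,i}(k,l)\in H$ ($0\le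 l\le k$) are defined by $c_\beta^{r,i}(0,0)=x^rg^i$ and, for $k\ge0$: $c_\beta^{r,i}(k+1,0)=c_\beta^{r,i}(k,0)S(y)+\beta yc_\beta^{r,i}(k,0)S(g)$; for $0<l<k+1$, $c_\beta^{r,i}(k+1,l)=c_\beta^{r,i}(k,l)S(y)+\beta\gamma^{-l}yc_\beta^{r,i}(k,l)S(g)+c_\beta^{r,i}(k,l-1)S(g)$; $c_\beta^{r,i}(k+1,k+1)=c_\beta^{r,i}(k,k)S(g)$. *)

(* Defs.v *)
From HB Require Import structures.
From mathcomp Require Import all_boot all_order all_algebra.
Set Implicit Arguments. Unset Strict Implicit. Unset Printing Implicit Defensive.
Import Order.TTheory GRing.Theory Num.Theory.
Local Open Scope ring_scope.

(* The Hopf algebra H = B(n,w,gam), realised through its PBW basis          *)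
(*   { x^a g^j y^m : a in Z, 0 <= j < n, 0 <= m < n }.                      *)
(* An element of H is written as a finite formal combination (a list) of    *)
(* words  x^a g^j y^m  with a : int and arbitrary j m : nat; such a word is *)
(* interpreted literally in H, and [coef h b] is the coordinate of h on the *)
(* (normalised) basis monomial b.  Two lists denote the same element of H   *)
(* iff all coordinates agree.                                               *)

(* (a, j, m) stands for the word x^a g^j y^m *)
Definition mono := (int * nat * nat)%type.
Definition Hel (k : fieldType) := seq (k * mono).

(* normal form of x^a g^j y^m, using g^n = x^w and y^n = 1 - x^w *)
Definition hnorm (k : fieldType) (n w : nat) (b : mono) : Hel k :=
  let: (a, j, m) := b in
  let q := (m %/ n)%N in
  [seq ((-1) ^+ t * ('C(q, t))%:R,
        (a + (w * (j %/ n))%N%:Z + (w * t)%N%:Z, (j %% n)%N, (m %% n)%N))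
  | t <- iota 0 q.+1].

Definition coef (k : fieldType) (n w : nat) (h : Hel k) (b : mono) : k :=
  \sum_(u <- h) u.1 * \sum_(d <- hnorm k n w u.2) d.1 * (d.2 == b)%:R.

Definition Hzero (k : fieldType) (n w : nat) (h : Hel k) : Prop :=
  forall b : mono, coef n w h b = 0.

Definition Hmono (k : fieldType) (b : mono) : Hel k := [:: (1, b)].
Definition Hadd (k : fieldType) (h1 h2 : Hel k) : Hel k := h1 ++ h2.
Definition Hscale (k : fieldType) (c : k) (h : Hel k) : Hel k :=
  [seq (c * u.1, u.2) | u <- h].

(* (x^a g^j y^m)(x^a' g^j' y^m') = gam^(m j') x^(a+a') g^(j+j') y^(m+m') *)
Definition mmul (b b' : mono) : mono :=
  (b.1.1 + b'.1.1, (b.1.2 + b'.1.2)%N, (b.2 + b'.2)%N).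
Definition mfac (k : fieldType) (gam : k) (b b' : mono) : k :=
  gam ^+ (b.2 * b'.1.2).
Definition Hmul (k : fieldType) (gam : k) (h1 h2 : Hel k) : Hel k :=
  [seq (u.1 * v.1 * mfac gam u.2 v.2, mmul u.2 v.2) | u <- h1, v <- h2].
Definition Hpow (k : fieldType) (gam : k) (h : Hel k) (m : nat) : Hel k :=
  iter m (Hmul gam h) (Hmono k (0%:Z, 0%N, 0%N)).

Definition hx (k : fieldType) : Hel k := Hmono k (1%:Z, 0%N, 0%N).
Definition hg (k : fieldType) : Hel k := Hmono k (0%:Z, 1%N, 0%N).
Definition hy (k : fieldType) : Hel k := Hmono k (0%:Z, 0%N, 1%N).
(* g^{-1} = x^{-w} g^{n-1} *)
Definition hginv (k : fieldType) (n w : nat) : Hel k :=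
  Hmono k (- (w%:Z), n.-1, 0%N).
Definition xpow (k : fieldType) (r : int) : Hel k := Hmono k (r, 0%N, 0%N).
(* g^i for i : int;  g^{-(j+1)} = x^{-w(j+1)} g^{(n-1)(j+1)} *)
Definition gpow (k : fieldType) (n w : nat) (i : int) : Hel k :=
  match i with
  | Posz j => Hmono k (0%:Z, j, 0%N)
  | Negz j => Hmono k (- ((w * j.+1)%N%:Z), (n.-1 * j.+1)%N, 0%N)
  end.

(* antipode: S(y) = - y g^{-1}, S(g) = g^{-1}, S(x) = x^{-1} *)
Definition Sy (k : fieldType) (n w : nat) (gam : k) : Hel k :=
  Hscale (-1) (Hmul gam (hy k) (hginv k n w)).
Definition Sg (k : fieldType) (n w : nat) : Hel k := hginv k n w.
Definition Smono (k : fieldType) (n w : nat) (gam : k) (b : mono) : Hel k :=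
  Hmul gam (Hmul gam (Hpow gam (Sy n w gam) b.2) (Hpow gam (hginv k n w) b.1.2))
       (xpow k (- b.1.1)).

Definition eps (k : fieldType) (h : Hel k) : k :=
  \sum_(u <- h) u.1 * (u.2.2 == 0)%N%:R.

(* Gaussian binomials for (A+B)^m with BA = gam AB *)
Fixpoint qbin (k : fieldType) (gam : k) (m t : nat) : k :=
  match m, t with
  | 0, 0 => 1
  | 0, _.+1 => 0
  | _.+1, 0 => 1
  | m'.+1, t'.+1 => qbin gam m' t'.+1 + gam ^+ (m' - t') * qbin gam m' t'
  end.

(* Delta(x^a g^j y^m) = sum_t qbin m t  x^a g^j y^t (x) x^a g^(j+t) y^(m-t) *)
Definition Dmono (k : fieldType) (gam : k) (b : mono) : seq (k * mono * mono) :=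
  [seq (qbin gam b.2 t, (b.1.1, b.1.2, t), (b.1.1, (b.1.2 + t)%N, (b.2 - t)%N))
  | t <- iota 0 b.2.+1].

(* (Delta (x) id) Delta h = sum c h1 (x) h2 (x) h3 *)
Definition Delta2 (k : fieldType) (gam : k) (h : Hel k)
  : seq (k * mono * mono * mono) :=
  flatten [seq flatten [seq [seq (u.1 * e.1.1 * f.1.1, f.1.2, f.2, e.2)
                             | f <- Dmono gam e.1.2]
                        | e <- Dmono gam u.2]
          | u <- h].

(* Yetter-Drinfeld modules on V = k^(p+1) (column vectors).                 *)
(* The H-module structure is given by the images X, Xi (= X^{-1}), G, Y of  *)
(* the generators x, x^{-1}, g, y, subject to the defining relations of H.  *)
(* The comodule structure is  delta(v) = sum_(b, M) in D  b (x) M v.        *)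

Section YD.
Variables (k : fieldType) (n w : nat) (gam : k) (p : nat).
Implicit Types (X Xi G Y : 'M[k]_p.+1) (D : seq (mono * 'M[k]_p.+1)).

Definition Xpow Xi X (a : int) : 'M[k]_p.+1 :=
  match a with Posz t => X ^+ t | Negz t => Xi ^+ t.+1 end.

Definition actm X Xi G Y (b : mono) : 'M[k]_p.+1 :=
  Xpow Xi X b.1.1 * G ^+ b.1.2 * Y ^+ b.2.

Definition act X Xi G Y (h : Hel k) (v : 'cV[k]_p.+1) : 'cV[k]_p.+1 :=
  \sum_(u <- h) u.1 *: (actm X Xi G Y u.2 *m v).

Definition is_Hmodule X Xi G Y : Prop :=
  X * Xi = 1 /\ Xi * X = 1 /\ X * G = G * X /\ X * Y = Y * X /\
  Y * G = gam *: (G * Y) /\ Y ^+ n = 1 - X ^+ w /\ G ^+ n = X ^+ w.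

(* elements of H (x) V as lists of pure tensors, and their coordinates *)
Definition tcoef (T : seq (Hel k * 'cV[k]_p.+1)) (b : mono) : 'cV[k]_p.+1 :=
  \sum_(u <- T) coef n w u.1 b *: u.2.
Definition teq (T T' : seq (Hel k * 'cV[k]_p.+1)) : Prop :=
  forall b, tcoef T b = tcoef T' b.
Definition t3coef (T : seq (mono * mono * 'cV[k]_p.+1)) (b1 b2 : mono)
  : 'cV[k]_p.+1 :=
  \sum_(u <- T) (coef n w (Hmono k u.1.1) b1 * coef n w (Hmono k u.1.2) b2) *: u.2.

Definition dapp D (v : 'cV[k]_p.+1) : seq (Hel k * 'cV[k]_p.+1) :=
  [seq (Hmono k d.1, d.2 *m v) | d <- D].

Definition is_Hcomodule D : Prop :=
  (forall v : 'cV[k]_p.+1, \sum_(d <- D) eps (Hmono k d.1) *: (d.2 *m v) = v) /\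
  (forall v b1 b2,
     t3coef (flatten [seq [seq (e.1.2, e.2, e.1.1 *: (d.2 *m v))
                           | e <- Dmono gam d.1] | d <- D]) b1 b2 =
     t3coef [seq (d.1, d'.1, d'.2 *m (d.2 *m v)) | d <- D, d' <- D] b1 b2).

(* delta(h.v) = h1 v(-1) S(h3) (x) h2 . v(0) *)
Definition is_YDcompat X Xi G Y D : Prop :=
  forall (h : Hel k) (v : 'cV[k]_p.+1),
    teq (dapp D (act X Xi G Y h v))
        [seq (Hmul gam (Hmul gam (Hmono k e.1.1.2) (Hmono k d.1))
                   (Smono n w gam e.2),
              e.1.1.1 *: act X Xi G Y (Hmono k e.1.2) (d.2 *m v))
        | e <- Delta2 gam h, d <- D].

Definition is_YDmodule X Xi G Y D : Prop :=
  [/\ is_Hmodule X Xi G Y, is_Hcomodule D & is_YDcompat X Xi G Y D].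

(* subspaces of V are represented by row spaces: v in U iff v^T <= U *)
Definition inW (U : 'M[k]_p.+1) (v : 'cV[k]_p.+1) : bool := (v^T <= U)%MS.

Definition is_YDsub X Xi G Y D (U : 'M[k]_p.+1) : Prop :=
  (forall h v, inW U v -> inW U (act X Xi G Y h v)) /\
  (forall v b, inW U v -> inW U (tcoef (dapp D v) b)).

Definition is_simpleYD X Xi G Y D : Prop :=
  is_YDmodule X Xi G Y D /\
  forall U : 'M[k]_p.+1, is_YDsub X Xi G Y D U -> (U == (0 : 'M[k]_p.+1))%MS \/ (U == (1%:M : 'M[k]_p.+1))%MS.

Definition is_standard X Xi G Y D (v : 'cV[k]_p.+1) (alpha beta : k) (r i : int)
  : Prop :=
  v != 0 /\ alpha != 0 /\ beta != 0 /\
  act X Xi G Y (hx k) v = alpha *: v /\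
  act X Xi G Y (hg k) v = beta *: v /\
  teq (dapp D v) [:: (Hmul gam (xpow k r) (gpow k n w i), v)].

End YD.

Fixpoint cel (k : fieldType) (n w : nat) (gam beta : k) (r i : int) (kk : nat)
  : nat -> Hel k :=
  match kk with
  | 0 => fun l => if l == 0%N then Hmul gam (xpow k r) (gpow k n w i) else [::]
  | kk'.+1 => fun l =>
      if l == 0%N then
        Hadd (Hmul gam (cel n w gam beta r i kk' 0) (Sy n w gam))
             (Hscale beta (Hmul gam (Hmul gam (hy k) (cel n w gam beta r i kk' 0))
                                (Sg k n w)))
      else if (l < kk'.+1)%N then
        Hadd (Hadd (Hmul gam (cel n w gam beta r i kk' l) (Sy n w gam))
                   (Hscale (beta * gam ^- l)
                      (Hmul gam (Hmul gam (hy k) (cel n w gam beta r i kk' l))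
                            (Sg k n w))))
             (Hmul gam (cel n w gam beta r i kk' l.-1) (Sg k n w))
      else if l == kk'.+1 then
        Hmul gam (cel n w gam beta r i kk' kk') (Sg k n w)
      else [::]
  end.

(* Main.v *)
Require Import Defs.
From HB Require Import structures.
From mathcomp Require Import all_boot all_order all_algebra.
From mathcomp Require Import zify ring.
Import GRing.Theory.
Local Open Scope ring_scope.
Set Implicit Arguments. Unset Strict Implicit.

Section Alg.
Variables (k : fieldType) (n w : nat) (gam : k).
Hypotheses (n_gt0 : (0 < n)%N) (gam_prim : n.-primitive_root gam).

Definition Bq (Q : nat) (z : int) : k :=
  \sum_(t < Q.+1) (-1) ^+ t * ('C(Q, t))%:R * (z == (w * t)%N%:Z)%:R.

Lemma pascal q (F : nat -> k) :
  \sum_(t < q.+2) (-1) ^+ t * ('C(q.+1, t))%:R * F t =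
  \sum_(t < q.+1) (-1) ^+ t * ('C(q, t))%:R * F t -
  \sum_(t < q.+1) (-1) ^+ t * ('C(q, t))%:R * F t.+1.
Proof.
pose H t := (-1) ^+ t * ('C(q, t))%:R * F t.
have shift : \sum_(t < q.+1) H t = H 0%N + \sum_(t < q.+1) H t.+1.
  rewrite big_ord_recl; congr (_ + _); rewrite big_ord_recr /=.
  by rewrite /H bin_small // mulr0 mul0r addr0.
rewrite big_ord_recl /=.
under eq_bigr => t _ do rewrite /bump /= binS natrD mulrDr mulrDl.
rewrite big_split /= addrA.
rewrite [\sum_(t < q.+1) (-1) ^+ t * ('C(q, t))%:R * F t]shift /H.
congr (_ + _); first by rewrite !bin0.
rewrite -sumrN; apply: eq_bigr => t _.
by rewrite exprS; ring.
Qed.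

Lemma eq_shift (z : int) t : (z == (w * t.+1)%N%:Z) = (z - w%:Z == (w * t)%N%:Z).
Proof. rewrite mulnS PoszD; apply/eqP/eqP; lia. Qed.

Lemma BqS Q z : Bq Q.+1 z = Bq Q z - Bq Q (z - w%:Z).
Proof.
rewrite /Bq (pascal _ (fun t => (z == (w * t)%N%:Z)%:R)); congr (_ - _); apply: eq_bigr => t _.
by rewrite eq_shift.
Qed.

Lemma BqD Q q z : Bq (Q + q) z =
  \sum_(t < q.+1) (-1) ^+ t * ('C(q, t))%:R * Bq Q (z - (w * t)%N%:Z).
Proof.
elim: q z => [|q IH] z.
  by rewrite addn0 big_ord1 /= expr0 bin0 mul1r mul1r muln0 subr0.
rewrite addnS BqS !IH (pascal _ (fun t => Bq Q (z - (w * t)%N%:Z))); congr (_ - _); apply: eq_bigr => t _.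
congr (_ * Bq _ _); rewrite mulnS PoszD; lia.
Qed.


Definition mc (x : mono) (b : mono) : k :=
  \sum_(d <- hnorm k n w x) d.1 * (d.2 == b)%:R.

Lemma coefE (h : Hel k) b : coef n w h b = \sum_(u <- h) u.1 * mc u.2 b.
Proof. by []. Qed.

Lemma CF A J E ab jb eb : mc (A, J, E) (ab, jb, eb) =
  (((J %% n)%N == jb) && ((E %% n)%N == eb))%:R * Bq (E %/ n)%N (ab - A - (w * (J %/ n))%N%:Z).
Proof.
rewrite /mc /hnorm big_map /Bq mulr_sumr.
change (iota 0 (E %/ n).+1) with (index_iota 0 (E %/ n).+1).
rewrite big_mkord; apply: eq_bigr => t _ /=.
rewrite !xpair_eqE.
have -> : (A + (w * (J %/ n))%N%:Z + (w * t)%N%:Z == ab) =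
          (ab - A - (w * (J %/ n))%N%:Z == (w * t)%N%:Z).
  by apply/eqP/eqP; lia.
case: (_ == (w * t)%N%:Z); case: (_ == jb); case: (_ == eb); rewrite /= ?mulr0 ?mul0r ?mulr1 ?mul1r //.
Qed.


Lemma gam_n : gam ^+ n = 1.
Proof. exact: prim_expr_order gam_prim. Qed.

Lemma gam_mod x : gam ^+ x = gam ^+ (x %% n)%N.
Proof. by rewrite (prim_expr_mod gam_prim). Qed.

Lemma K0 (a m c b : mono) :
  mfac gam a m * mfac gam (mmul a m) c * mc (mmul (mmul a m) c) b =
  \sum_(d <- hnorm k n w m) d.1 *
     (mfac gam a d.2 * mfac gam (mmul a d.2) c * mc (mmul (mmul a d.2) c) b).
Proof.
case: a => [[a1 j1] e1]; case: m => [[a0 j] e]; case: c => [[a2 j2] e2].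
case: b => [[ab jb] eb].
rewrite /hnorm big_map.
change (iota 0 (e %/ n).+1) with (index_iota 0 (e %/ n).+1).
rewrite big_mkord /mfac /mmul /=.
under eq_bigr => t _ do rewrite CF.
rewrite CF.
set J' := (j1 + j %% n + j2)%N; set E' := (e1 + e %% n + e2)%N.
have hj : (j1 + j + j2)%N = (j %/ n * n + J')%N by rewrite /J' {1}(divn_eq j n); lia.
have he : (e1 + e + e2)%N = (e %/ n * n + E')%N by rewrite /E' {1}(divn_eq e n); lia.
rewrite hj he !modnMDl !divnMDl //.
have hg : gam ^+ (e1 * j) * gam ^+ ((e1 + e) * j2) =
          gam ^+ (e1 * (j %% n)) * gam ^+ ((e1 + e %% n) * j2).
  rewrite -!exprD [LHS]gam_mod [RHS]gam_mod; congr (_ ^+ _).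
  rewrite {1}(divn_eq j n) {1}(divn_eq e n).
  have -> : (e1 * (j %/ n * n + j %% n) + (e1 + (e %/ n * n + e %% n)) * j2 =
     (e1 * (j %/ n) + e %/ n * j2) * n + (e1 * (j %% n) + (e1 + e %% n) * j2))%N by ring.
  by rewrite modnMDl.
rewrite hg [(e %/ n + E' %/ n)%N]addnC BqD !mulr_sumr; apply: eq_bigr => t _.
rewrite mulnDr PoszD.
have -> : (ab - (a1 + (a0 + (w * (j %/ n))%N%:Z + (w * t)%N%:Z) + a2) - (w * (J' %/ n))%N%:Z)
   = (ab - (a1 + a0 + a2) - ((w * (J' %/ n))%N%:Z + (w * (j %/ n))%N%:Z) - (w * t)%N%:Z).
  by ring.
rewrite [X in Bq _ (_ - X - _)]addrC. set B := Bq _ _. set I := (_ %:R). set g := (gam ^+ _ * gam ^+ _). set s := ((-1) ^+ t * _). ring.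
Qed.


Lemma coef_Hmul (h1 h2 : Hel k) b : coef n w (Hmul gam h1 h2) b =
  \sum_(u <- h1) \sum_(v <- h2) u.1 * v.1 * mfac gam u.2 v.2 * mc (mmul u.2 v.2) b.
Proof. by rewrite coefE /Hmul big_allpairs_dep. Qed.

Definition Phi (a : mono) (cl : Hel k) (b m : mono) : k :=
  coef n w (Hmul gam (Hmul gam (Hmono k a) (Hmono k m)) cl) b.

Lemma PhiE a cl b m : Phi a cl b m =
  \sum_(c <- cl) mfac gam a m * c.1 * mfac gam (mmul a m) c.2 * mc (mmul (mmul a m) c.2) b.
Proof.
rewrite /Phi coef_Hmul /Hmul big_allpairs_dep !big_seq1 /=.
by apply: eq_bigr => c _; rewrite !mul1r.
Qed.

Lemma lin a cl (h : Hel k) b :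
  coef n w (Hmul gam (Hmul gam (Hmono k a) h) cl) b = \sum_(u <- h) u.1 * Phi a cl b u.2.
Proof.
rewrite coef_Hmul {1}/Hmul big_allpairs_dep big_seq1 /=.
apply: eq_bigr => u _; rewrite PhiE mulr_sumr; apply: eq_bigr => c _ /=.
by rewrite mul1r; ring.
Qed.

Lemma Kl a cl b m : Phi a cl b m = \sum_(d <- hnorm k n w m) d.1 * Phi a cl b d.2.
Proof.
rewrite PhiE.
have E : forall c : k * mono, mfac gam a m * c.1 * mfac gam (mmul a m) c.2 * mc (mmul (mmul a m) c.2) b
  = c.1 * (mfac gam a m * mfac gam (mmul a m) c.2 * mc (mmul (mmul a m) c.2) b) by move=> c; ring.
under eq_bigr => c _ do rewrite E K0 mulr_sumr.
rewrite exchange_big /=; apply: eq_bigr => d _.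
rewrite PhiE mulr_sumr; apply: eq_bigr => c _; ring.
Qed.


Lemma pick (S : seq mono) (F : mono -> k) x : uniq S -> x \in S ->
  \sum_(y <- S) (x == y)%:R * F y = F x.
Proof.
elim: S => [//|y S IH] /= /andP [yS uS]; rewrite in_cons big_cons.
case: (eqVneq x y) => [->|xy] /= H.
  rewrite mul1r big_seq big1 ?addr0 // => z zS.
  by case: eqP => [eyz|]; [rewrite eyz zS in yS | rewrite mul0r].
by rewrite mul0r add0r IH.
Qed.

Definition supp (h : Hel k) : seq mono :=
  flatten [seq [seq d.2 | d <- hnorm k n w u.2] | u <- h].

Lemma FS a cl (h : Hel k) b (S : seq mono) : uniq S -> {subset supp h <= S} ->
  coef n w (Hmul gam (Hmul gam (Hmono k a) h) cl) b =
  \sum_(b' <- S) Phi a cl b b' * coef n w h b'.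
Proof.
move=> uS sS; rewrite lin.
under [RHS]eq_bigr => b' _ do rewrite coefE mulr_sumr.
rewrite exchange_big /= big_seq [RHS]big_seq; apply: eq_bigr => u uh.
rewrite Kl mulr_sumr.
under [RHS]eq_bigr => b' _ do rewrite /mc mulr_sumr mulr_sumr.
rewrite exchange_big /= big_seq [RHS]big_seq; apply: eq_bigr => d dh.
rewrite mulrA -(@pick S (fun y => u.1 * d.1 * Phi a cl b y) _ uS); last first.
  apply: sS; apply/flatten_mapP; exists u => //; exact: (map_f _ dh).
apply: eq_bigr => y _; ring.
Qed.

Lemma TR p a cl (M : 'M[k]_p.+1) (L1 L2 : seq (Hel k * 'cV[k]_p.+1)) :
  (forall b, tcoef n w L1 b = tcoef n w L2 b) ->
  forall b,
  tcoef n w [seq (Hmul gam (Hmul gam (Hmono k a) t.1) cl, M *m t.2) | t <- L1] b =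
  tcoef n w [seq (Hmul gam (Hmul gam (Hmono k a) t.1) cl, M *m t.2) | t <- L2] b.
Proof.
move=> HL b.
set S := undup (flatten [seq supp t.1 | t <- L1 ++ L2]).
have key : forall L, {subset L <= L1 ++ L2} ->
  tcoef n w [seq (Hmul gam (Hmul gam (Hmono k a) t.1) cl, M *m t.2) | t <- L] b =
  \sum_(b' <- S) Phi a cl b b' *: (M *m tcoef n w L b').
  move=> L sL; rewrite /tcoef big_map.
  under [RHS]eq_bigr => b' _ do rewrite mulmx_sumr scaler_sumr.
  rewrite exchange_big /= big_seq [RHS]big_seq; apply: eq_bigr => t tL.
  rewrite (@FS _ _ _ _ S) ?undup_uniq //; last first.
    move=> x xs; rewrite mem_undup; apply/flatten_mapP; exists t => //; exact: sL.
  rewrite scaler_suml; apply: eq_bigr => b' _.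
  by rewrite -scalemxAr scalerA.
have s1 : {subset L1 <= L1 ++ L2} by move=> t tL; rewrite mem_cat tL.
have s2 : {subset L2 <= L1 ++ L2} by move=> t tL; rewrite mem_cat tL orbT.
rewrite (key _ s1) (key _ s2).
by apply: eq_bigr => b' _; rewrite HL.
Qed.


Definition m0 : mono := (0%:Z, 0%N, 0%N).
Definition my : mono := (0%:Z, 0%N, 1%N).
Definition mg : mono := (0%:Z, 1%N, 0%N).

Lemma Hmul1l (h : Hel k) : Hmul gam (Hmono k m0) h = h.
Proof.
rewrite /Hmul /= cats0 -[RHS]map_id; apply: eq_map => -[s [[a j] e]] /=.
by rewrite /mfac /mmul /= mul0n expr0 !mul1r mulr1 add0r.
Qed.

Lemma Hmul1r (h : Hel k) : Hmul gam h (Hmono k m0) = h.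
Proof.
elim: h => [//|[s [[a j] e]] h IH].
rewrite /Hmul /= -/(Hmul gam h (Hmono k m0)) IH.
by rewrite /mfac /mmul /= muln0 expr0 !mulr1 addr0 !addn0.
Qed.

Lemma SmonoY : Smono n w gam my = Sy n w gam.
Proof.
rewrite /Smono /= /xpow.
have -> : (- (0%:Z) : int) = 0%:Z by [].
by rewrite -/m0 !Hmul1r.
Qed.

Lemma SmonoG : Smono n w gam mg = Sg k n w.
Proof.
rewrite /Smono /= /xpow.
have -> : (- (0%:Z) : int) = 0%:Z by [].
by rewrite -/m0 !Hmul1r Hmul1l.
Qed.

Lemma D2hy : Delta2 gam (hy k) =
  [:: (1, m0, m0, my); (1, m0, my, mg); (1, my, mg, mg)].
Proof.
rewrite /Delta2 /Dmono /hy /Hmono /=.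
rewrite subnn expr0 !mul1r !add0r !mulr1; reflexivity.
Qed.

Lemma coef_cat (h1 h2 : Hel k) b : coef n w (h1 ++ h2) b = coef n w h1 b + coef n w h2 b.
Proof. by rewrite !coefE big_cat. Qed.

Lemma coef_scale c (h : Hel k) b : coef n w (Hscale c h) b = c * coef n w h b.
Proof.
by rewrite !coefE /Hscale big_map mulr_sumr; apply: eq_bigr => u _; rewrite mulrA.
Qed.

Lemma coef_nil b : coef n w ([::] : Hel k) b = 0.
Proof. by rewrite coefE big_nil. Qed.

Lemma cel_out beta r i kk l : (kk < l)%N -> cel n w gam beta r i kk l = [::].
Proof.
case: kk => [|kk] /=; first by case: l.
case: l => [//|l] H /=.
rewrite ltnNge (ltnW H) /=.
by rewrite gtn_eqF.
Qed.

Lemma CS beta r i kk l b : (l <= kk.+1)%N ->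
  coef n w (cel n w gam beta r i kk.+1 l) b =
  coef n w (Hmul gam (cel n w gam beta r i kk l) (Sy n w gam)) b +
  beta * gam ^- l * coef n w (Hmul gam (Hmul gam (hy k) (cel n w gam beta r i kk l)) (Sg k n w)) b +
  (if l is l'.+1 then coef n w (Hmul gam (cel n w gam beta r i kk l') (Sg k n w)) b else 0).
Proof.
move=> hl /=.
case: l hl => [|l] hl /=.
  by rewrite coef_cat coef_scale expr0 invr1 mulr1 addr0.
case: ifP => hlt.
  by rewrite !coef_cat coef_scale.
have -> : l = kk by apply/eqP; rewrite -eqSS eqn_leq hl leqNgt hlt.
rewrite eqxx (@cel_out beta r i kk kk.+1) //.
by rewrite /Hmul /= !coef_nil mulr0 !add0r.
Qed.

End Alg.

Section Main.
Variables (k : fieldType) (n w : nat) (gam : k) (p : nat)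
  (X Xi G Y : 'M[k]_p.+1) (D : seq (mono * 'M[k]_p.+1))
  (v : 'cV[k]_p.+1) (alpha beta : k) (r i : int).
Hypotheses (n_gt0 : (0 < n)%N) (w_gt0 : (0 < w)%N)
  (gam_prim : n.-primitive_root gam)
  (HM : is_Hmodule n w gam X Xi G Y) (HC : is_YDcompat n w gam X Xi G Y D)
  (vstd : is_standard n w gam X Xi G Y D v alpha beta r i)
  (beta_n : beta ^+ n = 1).

Lemma act_mono m u : act X Xi G Y (Hmono k m) u = actm X Xi G Y m *m u.
Proof. by rewrite /act big_seq1 scale1r. Qed.

Lemma actm0 : actm X Xi G Y m0 = 1.
Proof. by rewrite /actm /= !expr0 !mul1r. Qed.
Lemma actmy : actm X Xi G Y my = Y.
Proof. by rewrite /actm /= !expr0 expr1 !mul1r. Qed.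
Lemma actmg : actm X Xi G Y mg = G.
Proof. by rewrite /actm /= !expr0 expr1 mul1r mulr1. Qed.

Lemma gam_neq0 : gam != 0.
Proof.
apply/negP => /eqP g0; have := prim_expr_order gam_prim.
by rewrite g0 expr0n; case: n n_gt0 => // m _ /eqP; rewrite eq_sym oner_eq0.
Qed.

Lemma Gv : G *m v = beta *: v.
Proof.
case: vstd => _ [_ [_ [_ [hg _]]]].
by rewrite /hg act_mono -/mg actmg in hg.
Qed.

Lemma GY l : G * Y ^+ l = gam ^- l *: (Y ^+ l * G).
Proof.
case: HM => _ [_ [_ [_ [YG _]]]].
have GY1 : G * Y = gam^-1 *: (Y * G).
  by rewrite YG scalerA mulVf ?gam_neq0 // scale1r.
elim: l => [|l IH]; first by rewrite !expr0 mulr1 mul1r invr1 scale1r.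
rewrite exprS mulrA GY1 -scalerAl -[Y * G * _]mulrA IH scalerAr scalerA scalerAr mulrA.
by rewrite [gam ^+ l.+1]exprS invfM scalerAr.
Qed.

Lemma GYv l : G *m (Y ^+ l *m v) = (beta * gam ^- l) *: (Y ^+ l *m v).
Proof.
rewrite mulmxA.
have -> : G *m Y ^+ l = G * Y ^+ l by [].
rewrite GY -scalemxAl.
have -> : (Y ^+ l * G) *m v = Y ^+ l *m (G *m v) by rewrite -mulmxA.
by rewrite Gv -scalemxAr scalerA mulrC.
Qed.


Lemma tcoef_cat (L1 L2 : seq (Hel k * 'cV[k]_p.+1)) b :
  tcoef n w (L1 ++ L2) b = tcoef n w L1 b + tcoef n w L2 b.
Proof. by rewrite /tcoef big_cat. Qed.

Lemma tcoef_iota (F : nat -> Hel k) (u : nat -> 'cV[k]_p.+1) N b :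
  tcoef n w [seq (F l, u l) | l <- iota 0 N] b = \sum_(l < N) coef n w (F l) b *: u l.
Proof.
rewrite /tcoef big_map.
have -> : iota 0 N = index_iota 0 N by rewrite /index_iota subn0.
by rewrite big_mkord.
Qed.

Lemma piece a m cl u :
  [seq (Hmul gam (Hmul gam (Hmono k a) (Hmono k d.1)) cl,
        1 *: act X Xi G Y (Hmono k m) (d.2 *m u)) | d <- D] =
  [seq (Hmul gam (Hmul gam (Hmono k a) t.1) cl, actm X Xi G Y m *m t.2) | t <- dapp D u].
Proof.
rewrite /dapp -map_comp; apply: eq_map => d /=.
by rewrite scale1r act_mono.
Qed.

Lemma TRi a cl (M : 'M[k]_p.+1) (F : nat -> Hel k) (u : nat -> 'cV[k]_p.+1) N b :
  tcoef n w [seq (Hmul gam (Hmul gam (Hmono k a) t.1) cl, M *m t.2)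
            | t <- [seq (F l, u l) | l <- iota 0 N]] b =
  \sum_(l < N) coef n w (Hmul gam (Hmul gam (Hmono k a) (F l)) cl) b *: (M *m u l).
Proof. by rewrite -map_comp tcoef_iota. Qed.

Lemma YYv l : Y *m (Y ^+ l *m v) = Y ^+ l.+1 *m v.
Proof. by rewrite mulmxA exprS. Qed.

Lemma Hmul0l (h : Hel k) : Hmul gam [::] h = [::].
Proof. by []. Qed.

Lemma Hmul0r (h : Hel k) : Hmul gam h [::] = [::].
Proof. by elim: h. Qed.

Lemma step kk : forall b,
  tcoef n w (dapp D (Y ^+ kk *m v)) b =
  tcoef n w [seq (cel n w gam beta r i kk l, Y ^+ l *m v) | l <- iota 0 kk.+1] b.
Proof.
elim: kk => [|kk IH] b.
  case: vstd => _ [_ [_ [_ [_ hd]]]].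
  by rewrite /= expr0 mul1mx (hd b).
have := HC (hy k) (Y ^+ kk *m v) b.
rewrite act_mono -/my actmy.
have -> : Y *m (Y ^+ kk *m v) = Y ^+ kk.+1 *m v by rewrite mulmxA exprS.
rewrite D2hy => ->.
set R := tcoef _ _ [seq _ | l <- _] _.
rewrite /= !tcoef_cat !piece !(TR n_gt0 gam_prim _ _ _ IH) !TRi /tcoef big_nil addr0.
rewrite SmonoY SmonoG actm0 actmy actmg.
under eq_bigr => l _ do rewrite Hmul1l mul1mx.
under [in X in _ + (X + _)]eq_bigr => l _ do rewrite Hmul1l YYv.
under [in X in _ + (_ + X)]eq_bigr => l _ do rewrite GYv scalerA -/(hy k).
rewrite /R tcoef_iota.
under [RHS]eq_bigr => l _ do rewrite (@CS _ n w gam beta r i kk l b (ltn_ord l)) !scalerDl.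
rewrite !big_split /=.
rewrite [X in _ = X + _ + _]big_ord_recr [X in _ = _ + X + _]big_ord_recr.
rewrite [X in _ = _ + _ + X]big_ord_recl /=.
rewrite (@cel_out _ _ _ gam beta r i kk kk.+1) // Hmul0l Hmul0r Hmul0l coef_nil !scale0r !addr0 mulr0 scale0r add0r.
rewrite addr0.
under [in X in _ = _ + X]eq_bigr => l _ do rewrite add0n /bump leq0n add1n.
rewrite -addrA; congr (_ + _); rewrite addrC; congr (_ + _).
by apply: eq_bigr => l _; rewrite mulrC.
Qed.


Lemma Xv : X *m v = alpha *: v.
Proof.
case: vstd => _ [_ [_ [hx _]]].
rewrite /hx act_mono /actm /= !expr0 expr1 !mulr1 in hx; exact: hx.
Qed.

Lemma XYv l : X *m (Y ^+ l *m v) = alpha *: (Y ^+ l *m v).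
Proof.
case: HM => _ [_ [_ [XY _]]].
have c : GRing.comm X (Y ^+ l) by apply: commrX.
rewrite mulmxA.
have -> : X *m Y ^+ l = Y ^+ l *m X by exact: c.
by rewrite -mulmxA Xv scalemxAr.
Qed.

Lemma XiYv l : Xi *m (Y ^+ l *m v) = alpha^-1 *: (Y ^+ l *m v).
Proof.
case: HM => XXi [XiX [_ [XY _]]].
case: vstd => _ [a0 _].
have c : Xi * Y = Y * Xi.
  by rewrite -[Xi * Y]mulr1 -XXi mulrA -(mulrA Xi) -XY mulrA XiX mul1r.
have c' : GRing.comm Xi (Y ^+ l) by apply: commrX.
rewrite mulmxA.
have -> : Xi *m Y ^+ l = Y ^+ l *m Xi by exact: c'.
rewrite -mulmxA.
have -> : Xi *m v = alpha^-1 *: v.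
  apply: (@scalerI _ _ alpha) => //.
  rewrite scalerA mulfV // scale1r scalemxAr -Xv mulmxA.
  have -> : Xi *m X = 1 by exact: XiX.
  by rewrite mul1mx.
by rewrite -scalemxAr.
Qed.

Lemma GpowYv j l : G ^+ j *m (Y ^+ l *m v) = (beta * gam ^- l) ^+ j *: (Y ^+ l *m v).
Proof.
elim: j => [|j IH]; first by rewrite !expr0 mul1mx scale1r.
rewrite exprS.
have -> : (G * G ^+ j) *m (Y ^+ l *m v) = G *m (G ^+ j *m (Y ^+ l *m v)) by rewrite -mulmxA.
by rewrite IH -scalemxAr GYv scalerA -exprSr.
Qed.

Lemma XpowYv j l : X ^+ j *m (Y ^+ l *m v) = alpha ^+ j *: (Y ^+ l *m v).
Proof.
elim: j => [|j IH]; first by rewrite !expr0 mul1mx scale1r.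
rewrite exprS.
have -> : (X * X ^+ j) *m (Y ^+ l *m v) = X *m (X ^+ j *m (Y ^+ l *m v)) by rewrite -mulmxA.
by rewrite IH -scalemxAr XYv scalerA -exprSr.
Qed.

Lemma XipowYv j l : Xi ^+ j *m (Y ^+ l *m v) = alpha^-1 ^+ j *: (Y ^+ l *m v).
Proof.
elim: j => [|j IH]; first by rewrite !expr0 mul1mx scale1r.
rewrite exprS.
have -> : (Xi * Xi ^+ j) *m (Y ^+ l *m v) = Xi *m (Xi ^+ j *m (Y ^+ l *m v)) by rewrite -mulmxA.
by rewrite IH -scalemxAr XiYv scalerA -exprSr.
Qed.

Lemma actmYv (b : mono) l : exists c, actm X Xi G Y b *m (Y ^+ l *m v) = c *: (Y ^+ (b.2 + l) *m v).
Proof.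
case: b => [[a j] e] /=; rewrite /actm /=.
have -> : Xpow Xi X a * G ^+ j * Y ^+ e *m (Y ^+ l *m v) =
  Xpow Xi X a *m (G ^+ j *m (Y ^+ (e + l) *m v)).
  by rewrite exprD -!mulmxE !mulmxA.
rewrite GpowYv -scalemxAr.
case: a => a /=; [rewrite XpowYv | rewrite XipowYv]; rewrite scalerA; eexists; reflexivity.
Qed.

Lemma Gpowv j : G ^+ j *m v = beta ^+ j *: v.
Proof. by have := GpowYv j 0; rewrite expr0 mul1mx invr1 mulr1. Qed.

Lemma Ynv : Y ^+ n *m v = 0.
Proof.
case: HM => _ [_ [_ [_ [_ [Yn Gn]]]]].
case: vstd => vn0 [a0 [b0 _]].
rewrite Yn mulmxBl mul1mx -Gn Gpowv beta_n scale1r subrr.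
by [].
Qed.


Lemma trZ (b : 'cV[k]_p.+1) (c : k) : (c *: b)^T = c *: b^T.
Proof. by apply/matrixP => i0 j; rewrite !mxE. Qed.

Lemma final (Vsimple : is_simpleYD n w gam X Xi G Y D) :
  forall l : nat, (l <= p)%N -> Hzero n w (cel n w gam beta r i p.+1 l).
Proof.
case: vstd => vn0 [a0 [b0 _]].
have ex : exists l, Y ^+ l *m v == 0 by exists n; rewrite Ynv.
have [m Hm Hmin] := ex_minnP ex.
have mn : (m <= n)%N by apply: Hmin; rewrite Ynv.
have nz : forall l, (l < m)%N -> Y ^+ l *m v != 0.
  by move=> l lm; apply/negP => /Hmin; rewrite leqNgt lm.
have zero : forall l, (m <= l)%N -> Y ^+ l *m v = 0.
  move=> l ml; rewrite -(subnK ml) exprD.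
  have -> : Y ^+ (l - m) * Y ^+ m *m v = Y ^+ (l - m) *m (Y ^+ m *m v) by rewrite mulmxA.
  by rewrite (eqP Hm) mulmx0.
pose lam (t : nat) := beta * gam ^- t.
have laminj : forall s t : 'I_m, lam s = lam t -> s = t.
  move=> s t /(mulfI b0) /invr_inj /eqP.
  rewrite (eq_prim_root_expr gam_prim) !modn_small => [/eqP st||]; last 2 first.
  - exact: leq_trans (ltn_ord t) mn.
  - exact: leq_trans (ltn_ord s) mn.
  exact: val_inj.
have prodG : forall (s : seq 'I_m) (P : pred 'I_m) (u : 'cV[k]_p.+1) mu,
    G *m u = mu *: u ->
    (\prod_(t <- s | P t) (G - (lam t)%:M)) *m u = (\prod_(t <- s | P t) (mu - lam t)) *: u.
  move=> s P u mu Gu; elim: s => [|t s IH]; first by rewrite !big_nil mul1mx scale1r.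
  rewrite !big_cons; case: (P t) => //.
  have -> : (G - (lam t)%:M) * \prod_(j <- s | P j) (G - (lam j)%:M) *m u =
            (G - (lam t)%:M) *m (\prod_(j <- s | P j) (G - (lam j)%:M) *m u).
    by rewrite mulmxA.
  rewrite IH -scalemxAr mulmxBl mul_scalar_mx Gu -scalerBl scalerA.
  by rewrite mulrC.
have IND : forall c : 'I_m -> k, \sum_(j < m) c j *: (Y ^+ j *m v) = 0 -> forall j, c j = 0.
  move=> c Hs j.
  have := congr1 (mulmx (\prod_(t < m | t != j) (G - (lam t)%:M))) Hs.
  rewrite mulmx0 mulmx_sumr.
  under eq_bigr => t _ do rewrite -scalemxAr (prodG _ _ _ _ (GYv t)) scalerA.
  rewrite [\sum_(t < m) _](bigD1 j) //= [\sum_(t < m | _) _]big1 ?addr0; last first.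
    move=> t tj; rewrite (bigD1 t) //= subrr mul0r mulr0 scale0r //.
  have Pn : \prod_(t < m | t != j) (lam j - lam t) != 0.
    apply/prodf_neq0 => t tj.
    by rewrite subr_eq0; apply/eqP => /laminj e; rewrite e eqxx in tj.
  move/eqP; rewrite scaler_eq0 (negbTE (nz _ (ltn_ord j))) orbF mulf_eq0.
  by rewrite (negbTE Pn) orbF => /eqP.
pose M := \matrix_(j < m) (Y ^+ j *m v)^T.
have rowM : forall j, row j M = (Y ^+ j *m v)^T by move=> j; rewrite rowK.
have rfree : row_free M.
  rewrite -kermx_eq0; apply/rowV0P => x /sub_kermxP; rewrite mulmx_sum_row => Hx.
  have Hs : \sum_j x 0 j *: (Y ^+ j *m v) = 0.
    apply: trmx_inj; rewrite trmx0 -Hx raddf_sum; apply: eq_bigr => j _.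
    rewrite rowM; exact: trZ.
  by apply/rowP => j; rewrite (IND _ Hs j) mxE.
have memY : forall l, ((Y ^+ l *m v)^T <= M)%MS.
  move=> l; case: (ltnP l m) => h.
    by rewrite -(rowM (Ordinal h)) row_sub.
  by rewrite zero // trmx0 sub0mx.
have memZ : forall (u : 'cV[k]_p.+1) c, (u^T <= M)%MS -> ((c *: u)^T <= M)%MS.
  by move=> u c hu; rewrite trZ scalemx_sub.
have memS : forall (I : Type) (s : seq I) (F : I -> 'cV[k]_p.+1),
    (forall x, ((F x)^T <= M)%MS) -> ((\sum_(x <- s) F x)^T <= M)%MS.
  move=> I s F HF; apply: (big_ind (fun u : 'cV[k]_p.+1 => (u^T <= M)%MS)) => //.
    by rewrite trmx0 sub0mx.
  by move=> x y hx hy; rewrite raddfD addmx_sub.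
have clos : forall (A : 'M[k]_p.+1),
    (forall j : 'I_m, ((A *m (Y ^+ j *m v))^T <= M)%MS) ->
    forall u : 'cV[k]_p.+1, (u^T <= M)%MS -> ((A *m u)^T <= M)%MS.
  move=> A HA u hu0; have [Dm hu] := submxP hu0; rewrite trmx_mul hu -mulmxA.
  apply: submx_trans (submxMl _ _) _; apply/row_subP => j.
  by rewrite row_mul rowM -trmx_mul; exact: HA.
pose U := (<<M>>)%MS.
have subYD : is_YDsub n w X Xi G Y D U.
  split.
    move=> h u; rewrite /inW !genmxE => hu.
    have -> : act X Xi G Y h u = (\sum_(t <- h) t.1 *: actm X Xi G Y t.2) *m u.
      by rewrite /act mulmx_suml; apply: eq_bigr => t _; rewrite scalemxAl.
    apply: clos hu => j; rewrite mulmx_suml; apply: (memS) => t.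
    rewrite -scalemxAl; apply: (memZ); have [c ->] := actmYv t.2 j.
    exact: (memZ).
  move=> u b; rewrite /inW !genmxE => hu.
  have E : forall u', tcoef n w (dapp D u') b =
      (\sum_(d <- D) coef n w (Hmono k d.1) b *: d.2) *m u'.
    by move=> u'; rewrite /tcoef /dapp big_map mulmx_suml; apply: eq_bigr => d _; rewrite scalemxAl.
  rewrite E; apply: clos hu => j; rewrite -E step tcoef_iota.
  by apply: (memS) => t; apply: (memZ).
have hm : m = p.+1.
  case: Vsimple => _ /(_ U subYD) [] HU.
    have := memY 0%N; rewrite expr0 mul1mx => hv0.
    have hv : (v^T <= U)%MS by rewrite /U genmxE.
    have := submx_trans hv (proj1 (andP HU)); rewrite submx0 trmx_eq0 => /eqP v0.
    by rewrite v0 eqxx in vn0.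
  have := eqmx_rank HU; rewrite mxrank1 genmxE (eqP rfree) => ->.
  by [].
move=> l lp b.
have hs := step p.+1 b.
rewrite zero ?hm // tcoef_iota big_ord_recr /= zero ?hm // scaler0 addr0 in hs.
have h0 : tcoef n w (dapp D 0) b = 0.
  by rewrite /tcoef /dapp big_map big1 // => d _; rewrite mulmx0 scaler0.
rewrite h0 in hs.
subst m.
exact: (IND (fun j : 'I_p.+1 => coef n w (cel n w gam beta r i p.+1 j) b) (esym hs) (Ordinal (lp : (l < p.+1)%N))).
Qed.

End Main.

Unset Implicit Arguments.
Set Strict Implicit.

Theorem lemma3p15 (k : closedFieldType) (chark : [pchar k] =i pred0)
  (n w : nat) (gam : k) (n_gt0 : (0 < n)%N) (w_gt0 : (0 < w)%N)
  (gam_prim : n.-primitive_root gam)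
  (p : nat) (X Xi G Y : 'M[k]_p.+1) (D : seq (mono * 'M[k]_p.+1))
  (Vsimple : is_simpleYD n w gam X Xi G Y D)
  (v : 'cV[k]_p.+1) (alpha beta : k) (r i : int)
  (vstd : is_standard n w gam X Xi G Y D v alpha beta r i)
  (beta_n : beta ^+ n = 1) :
  forall l : nat, (l <= p)%N -> Hzero n w (cel n w gam beta r i p.+1 l).
Proof.
have [[HM _ HC] _] := Vsimple.
by eapply final; eauto.
Qed.
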